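(* Let $n\ge3$ and let $(\mathbb{R}^n,g)$ be the pseudo-Euclidean space with Cartesian coordinates $x=(x_1,\dots,x_n)$ and $g_{ij}=\delta_{ij}\varepsilon_i$, $\varepsilon_i=\pm1$. Let $\xi=\sum_{i=1}^n\alpha_ix_i$ with $\alpha_i\in\mathbb{R}$ and $\sum_{i=1}^n\varepsilon_i\alpha_i^2=\varepsilon_{i_0}\in\{-1,0,1\}$, and let $\varphi(\xi)>0$, $\psi(\xi)$, $N(\xi)>0$ be smooth functions of $\xi$ on an open set $\Omega\subseteq\mathbb{R}^n$. Then $(\Omega,\bar g,N,\psi)$ with $\bar g=g/\varphi^2$ is an electrostatic system if and only if $$(n-2)\varphi''N-\varphi N''-2\varphi'N'+\frac{2\varphi}{N}(\psi')^2=0,$$ $$\varepsilon_{i_0}\Big\{\varphi\varphi''N-(n-1)N(\varphi')^2+\varphi\varphi'N'-\frac{2\varphi^2(\psi')^2}{(n-1)N}\Big\}=0,$$ $$\varepsilon_{i_0}\big\{\varphi N\psi''-(n-2)\varphi'N\psi'-\varphi N'\psi'\big\}=0,$$ $$\varepsilon_{i_0}\big\{\varphi NN''-(n-2)\varphi'NN'-\widehat C^2\varphi(\psi')^2\big\}=0,$$ where $\widehat C^2=\frac{2(n-2)}{n-1}$ and $'$ denotes $d/d\xi$. In particular, if $\sum_i\varepsilon_i\alpha_i^2=0$, the condition reduces to $(n-2)\varphi''N-\varphi N''-2\varphi'N'+\frac{2\varphi}{N}(\psi')^2=0$.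
   Context: Definition (electrostatic system): Let $(M^n,h)$, $n\ge3$, be a semi-Riemannian manifold and $N:M\to\mathbb{R}_{>0}$, $\psi:M\to\mathbb{R}$ smooth. $(M,h,N,\psi)$ is an electrostatic system if $\Delta N=\widehat C^2\frac{|\nabla\psi|^2}{N}$, $\operatorname{div}\big(\frac{\nabla\psi}{N}\big)=0$, and $N\operatorname{Ric}=\nabla^2N-2\frac{\nabla\psi\otimes\nabla\psi}{N}+\frac{2}{(n-1)N}|\nabla\psi|^2h$, with $\widehat C^2=\frac{2(n-2)}{n-1}$ and all operators taken with respect to $h$. *)

(* Defs.v *)
From HB Require Import structures.
From mathcomp Require Import all_boot all_order all_algebra.
From mathcomp Require Import all_classical all_reals all_analysis.
Set Implicit Arguments. Unset Strict Implicit. Unset Printing Implicit Defensive.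
Import Order.TTheory GRing.Theory Num.Theory.
Import numFieldNormedType.Exports.
Local Open Scope ring_scope.
Local Open Scope classical_set_scope.

Definition smooth_on (R : realType) (J : set R) (f : R -> R) : Prop :=
  forall (k : nat) (t : R), J t -> derivable (derive1n k f) t 1.

(* Points of R^n are row vectors x, with Cartesian coordinates x_i = x ord0 i. *)
Definition pd (R : realType) (n : nat) (f : 'rV[R]_n -> R) (i : 'I_n)
  : 'rV[R]_n -> R := fun x => derive f x (delta_mx ord0 i).

Definition hinv (R : realType) (n : nat) (h : 'rV[R]_n -> 'M[R]_n) x :=
  invmx (h x).

Definition Gam (R : realType) (n : nat) (h : 'rV[R]_n -> 'M[R]_n)
  (k i j : 'I_n) : 'rV[R]_n -> R := fun x =>
  2^-1 * \sum_(l < n) hinv h x k l *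
    (pd (fun y => h y j l) i x + pd (fun y => h y i l) j x
     - pd (fun y => h y i j) l x).

Definition Ric (R : realType) (n : nat) (h : 'rV[R]_n -> 'M[R]_n)
  (i j : 'I_n) (x : 'rV[R]_n) : R :=
  \sum_(k < n) (pd (Gam h k i j) k x - pd (Gam h k i k) j x
    + \sum_(l < n) (Gam h k k l x * Gam h l i j x - Gam h k j l x * Gam h l i k x)).

Definition Hess (R : realType) (n : nat) (h : 'rV[R]_n -> 'M[R]_n)
  (f : 'rV[R]_n -> R) (i j : 'I_n) (x : 'rV[R]_n) : R :=
  pd (pd f j) i x - \sum_(k < n) Gam h k i j x * pd f k x.

Definition Lap (R : realType) (n : nat) (h : 'rV[R]_n -> 'M[R]_n)
  (f : 'rV[R]_n -> R) (x : 'rV[R]_n) : R :=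
  \sum_(i < n) \sum_(j < n) hinv h x i j * Hess h f i j x.

Definition gradnorm2 (R : realType) (n : nat) (h : 'rV[R]_n -> 'M[R]_n)
  (f : 'rV[R]_n -> R) (x : 'rV[R]_n) : R :=
  \sum_(i < n) \sum_(j < n) hinv h x i j * pd f i x * pd f j x.

Definition gradv (R : realType) (n : nat) (h : 'rV[R]_n -> 'M[R]_n)
  (f : 'rV[R]_n -> R) (i : 'I_n) (x : 'rV[R]_n) : R :=
  \sum_(j < n) hinv h x i j * pd f j x.

Definition divg (R : realType) (n : nat) (h : 'rV[R]_n -> 'M[R]_n)
  (V : 'I_n -> 'rV[R]_n -> R) (x : 'rV[R]_n) : R :=
  \sum_(i < n) (pd (V i) i x + \sum_(k < n) Gam h i i k x * V k x).

Definition Chat2 (R : realType) (n : nat) : R := 2 * (n - 2)%:R / (n - 1)%:R.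

Definition electrostatic (R : realType) (n : nat) (Om : set 'rV[R]_n)
  (h : 'rV[R]_n -> 'M[R]_n) (N psi : 'rV[R]_n -> R) : Prop :=
  forall x, Om x ->
    [/\ 0 < N x,
        Lap h N x = Chat2 R n * gradnorm2 h psi x / N x,
        divg h (fun i y => gradv h psi i y / N y) x = 0 &
        forall i j : 'I_n,
          N x * Ric h i j x =
          Hess h N i j x - 2 * (pd psi i x * pd psi j x) / N x
          + 2 / ((n - 1)%:R * N x) * gradnorm2 h psi x * h x i j].

Definition xi (R : realType) (n : nat) (alpha : 'I_n -> R) (x : 'rV[R]_n) : R :=
  \sum_(i < n) alpha i * x ord0 i.

Definition gbar (R : realType) (n : nat) (eps alpha : 'I_n -> R) (phi : R -> R)
  (x : 'rV[R]_n) : 'M[R]_n :=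
  \matrix_(i, j) ((i == j)%:R * eps i / phi (xi alpha x) ^+ 2).

(* Main.v *)
Require Import Defs.
From HB Require Import structures.
From mathcomp Require Import all_boot all_order all_algebra.
From mathcomp Require Import all_classical all_reals all_analysis.
From mathcomp Require Import ring lra.
Import Order.TTheory GRing.Theory Num.Theory.
Import numFieldNormedType.Exports.
Local Open Scope ring_scope.
Local Open Scope classical_set_scope.
Set Implicit Arguments. Unset Strict Implicit.

Lemma sum_delta (R : pzRingType) n (F : 'I_n -> R) j :
  \sum_(k < n) (k == j)%:R * F k = F j.
Proof.
rewrite (bigD1 j) //= eqxx mul1r big1 ?addr0 // => k /negbTE ->.
by rewrite mul0r.
Qed.

Lemma sum_delta' (R : pzRingType) n (F : 'I_n -> R) j :
  \sum_(k < n) (j == k)%:R * F k = F j.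
Proof. by rewrite -(@sum_delta _ _ F j); apply: eq_bigr => k _; rewrite eq_sym. Qed.

Lemma xi_shift (R : realType) n (alpha : 'I_n -> R) (y : 'rV[R]_n) i (h : R) :
  xi alpha (h *: delta_mx ord0 i + y) = h * alpha i + xi alpha y.
Proof.
rewrite /xi.
under eq_bigr do rewrite !mxE mulrDr.
rewrite big_split /=; congr (_ + _).
under eq_bigr do rewrite mulrCA mulrC.
rewrite -mulr_suml; under eq_bigr do rewrite mulrC.
by rewrite sum_delta mulrC.

Qed.

Lemma pd_comp (R : realType) n (alpha : 'I_n -> R) (F : R -> R) (y : 'rV[R]_n) i :
  derivable F (xi alpha y) 1 ->
  pd (F \o xi alpha) i y = alpha i * derive1 F (xi alpha y).
Proof.
move=> dF.
have -> : pd (F \o xi alpha) i y = derive F (xi alpha y) (alpha i).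
  rewrite /pd /derive.
  have -> : (fun h : R => h^-1 *: (((F \o xi alpha) \o shift y) (h *: delta_mx ord0 i) - (F \o xi alpha) y)) = (fun h : R => h^-1 *: ((F \o shift (xi alpha y)) (h *: alpha i) - F (xi alpha y))).
    by apply/funext => h /=; rewrite xi_shift.
  reflexivity.
rewrite derive1E' ?deriveE; last exact/derivable1_diffP.
  by rewrite -{1}[alpha i]mulr1 linearZ.
exact/derivable1_diffP.
Qed.

Lemma pd_near (R : realType) n (alpha : 'I_n -> R) (F : R -> R) (f : 'rV[R]_n -> R) (y : 'rV[R]_n) (i : 'I_n) :
  (\forall z \near y, f z = F (xi alpha z)) ->
  derivable F (xi alpha y) 1 ->
  pd f i y = alpha i * derive1 F (xi alpha y).
Proof.
move=> fE dF; rewrite -pd_comp //; rewrite /pd.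
exact: near_eq_derive.
Qed.

Definition Dv (R : realType) (f : R -> R) t d := derivable f t 1 /\ derive1 f t = d.

Lemma Dv_of (R : realType) (f : R -> R) t : derivable f t 1 -> Dv f t (derive1 f t).
Proof. by []. Qed.

Lemma Dv_mul (R : realType) (f g : R -> R) t a b : Dv f t a -> Dv g t b ->
  Dv (fun s => f s * g s) t (a * g t + f t * b).
Proof.
move=> [df fa] [dg gb]; split.
  exact: (derivableM df dg).
rewrite derive1E (deriveM df dg) -!derive1E fa gb /=.
by rewrite /GRing.scale /= addrC mulrC.
Qed.

Lemma Dv_inv (R : realType) (f : R -> R) t a : f t != 0 -> Dv f t a ->
  Dv (fun s => (f s)^-1) t (- a / f t ^+ 2).
Proof.
move=> f0 [df fa]; split.
  exact: (derivableV f0 df).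
rewrite derive1E (deriveV f0 df) -!derive1E fa /=.
by change (- (f t ^- 2) * a = - a / f t ^+ 2); rewrite !mulNr mulrC.
Qed.

Lemma Dv_add (R : realType) (f g : R -> R) t a b : Dv f t a -> Dv g t b ->
  Dv (fun s => f s + g s) t (a + b).
Proof.
move=> [df fa] [dg gb]; split.
  exact: (derivableD df dg).
by rewrite derive1E (deriveD df dg) -!derive1E fa gb.
Qed.

Lemma Dv_cst (R : realType) (c : R) t : Dv (fun _ => c) t 0.
Proof.
split; first exact: derivable_cst.
by rewrite derive1E; exact: derive_cst.
Qed.

Lemma Dv_ext (R : realType) (f g : R -> R) t a : (forall s, f s = g s) -> Dv f t a -> Dv g t a.
Proof. by move=> fg; rewrite (funext fg). Qed.

Lemma Dv_eq (R : realType) (f : R -> R) t a b : a = b -> Dv f t a -> Dv f t b.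
Proof. by move=> ->. Qed.

Definition cc (R : realType) n (eps alpha : 'I_n -> R) (k i j : 'I_n) : R :=
  (j == k)%:R * alpha i + (i == k)%:R * alpha j - (i == j)%:R * eps i * eps k * alpha k.

Lemma S1 (R : realType) n (eps alpha : 'I_n -> R) i j :
  \sum_k alpha k * cc eps alpha k i j =
  2 * alpha i * alpha j - (i == j)%:R * eps i * \sum_k eps k * alpha k ^+ 2.
Proof.
rewrite (eq_bigr (fun k => (j==k)%:R * (alpha k * alpha i) + (i==k)%:R * (alpha k * alpha j)
   - ((i==j)%:R * eps i) * (eps k * alpha k ^+2))); last by move=> k _; rewrite /cc; ring.
rewrite sumrB big_split /= !sum_delta' -mulr_sumr; ring.
Qed.

Lemma S2 (R : realType) n (eps alpha : 'I_n -> R) (e2 : forall k, eps k * eps k = 1) i :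
  \sum_k cc eps alpha k i k = n%:R * alpha i.
Proof.
rewrite (eq_bigr (fun k => alpha i + ((i==k)%:R * alpha k - (i==k)%:R * (eps i * eps k * alpha k)))); last by move=> k _; rewrite /cc eqxx /=; ring.
rewrite big_split /= sumrB !sum_delta' e2 sumr_const card_ord; ring.
Qed.

Lemma S3 (R : realType) n (eps alpha : 'I_n -> R) (e2 : forall k, eps k * eps k = 1) l :
  \sum_k cc eps alpha k k l = n%:R * alpha l.
Proof.
rewrite (eq_bigr (fun k => alpha l + ((l==k)%:R * alpha k - (l==k)%:R * (eps k * eps k * alpha k)))); last by move=> k _; rewrite /cc eqxx eq_sym /=; ring.
rewrite big_split /= sumrB !sum_delta' e2 sumr_const card_ord; ring.
Qed.

Lemma cc_expand (R : realType) n (eps alpha : 'I_n -> R) k j l (X : R) :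
  cc eps alpha k j l * X = (l == k)%:R * (alpha j * X) + (j == k)%:R * (alpha l * X)
     - (j == l)%:R * (eps j * eps k * alpha k * X).
Proof. rewrite /cc; ring. Qed.

Lemma S5 (R : realType) n (eps alpha : 'I_n -> R) (e2 : forall k, eps k * eps k = 1) i j :
  \sum_k eps j * eps k * alpha k * cc eps alpha j i k =
  (i == j)%:R * eps j * \sum_k eps k * alpha k ^+ 2.
Proof.
rewrite (eq_bigr (fun k => (k == j)%:R * (eps j * eps k * alpha k * alpha i) +
   (i == j)%:R * eps j * (eps k * alpha k ^+ 2)
   - (i == k)%:R * (eps i * eps k * (eps j * eps j) * alpha j * alpha k))); last first.
  by move=> k _; rewrite /cc; ring.
rewrite sumrB big_split /= sum_delta sum_delta' -mulr_sumr !e2; ring.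
Qed.

Lemma S4 (R : realType) n (eps alpha : 'I_n -> R) (e2 : forall k, eps k * eps k = 1) i j :
  \sum_k \sum_l cc eps alpha k j l * cc eps alpha l i k =
  (n%:R + 2) * alpha i * alpha j - 2 * (i == j)%:R * eps i * \sum_k eps k * alpha k ^+ 2.
Proof.
set e0 := \sum_k eps k * alpha k ^+ 2.
rewrite (eq_bigr (fun k => alpha j * cc eps alpha k i k +
   (j == k)%:R * (2 * alpha i * alpha k - (i == k)%:R * eps i * e0)
   - eps j * eps k * alpha k * cc eps alpha j i k)); last first.
  move=> k _; under eq_bigr do rewrite cc_expand.
  rewrite sumrB big_split /= sum_delta -!mulr_sumr S1 sum_delta'.
  by rewrite -/e0.
rewrite sumrB big_split /= -mulr_sumr S2 // sum_delta' S5 //.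
have -> : (i == j)%:R * eps j = (i == j)%:R * eps i :> R.
  by case: eqVneq => [->|]; rewrite ?mul0r.
rewrite -/e0; ring.
Qed.

Section Main.
Variables (R : realType) (n : nat) (eps alpha : 'I_n -> R) (J : set R)
  (Om : set 'rV[R]_n) (phi psi N : R -> R).
Hypothesis e2 : forall k, eps k * eps k = 1.
Hypothesis oJ : open J.
Hypothesis sphi : smooth_on J phi.
Hypothesis spsi : smooth_on J psi.
Hypothesis sN : smooth_on J N.
Hypothesis oOm : open Om.
Hypothesis OmJ : forall x, Om x -> J (xi alpha x).
Hypothesis phipos : forall x, Om x -> 0 < phi (xi alpha x).
Hypothesis Npos : forall x, Om x -> 0 < N (xi alpha x).

Local Notation h := (gbar eps alpha phi).
Local Notation X := (xi alpha).
Local Notation c := (cc eps alpha).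

Lemma sm0 f t : smooth_on J f -> J t -> derivable f t 1.
Proof. by move=> sf Jt; exact: (sf 0%N t Jt). Qed.
Lemma sm1 f t : smooth_on J f -> J t -> derivable (derive1 f) t 1.
Proof. by move=> sf Jt; exact: (sf 1%N t Jt). Qed.

Lemma nearOm x : Om x -> \forall z \near x, Om z.
Proof. by move=> Omx; apply: open_nbhs_nbhs. Qed.

Lemma phine0 y : Om y -> phi (X y) != 0.
Proof. by move=> /phipos /lt0r_neq0. Qed.

Lemma hE y i j : h y i j = (i == j)%:R * eps i / phi (X y) ^+ 2.
Proof. by rewrite /gbar mxE. Qed.

Lemma hinvE y i j : Om y -> hinv h y i j = (i == j)%:R * eps i * phi (X y) ^+ 2.
Proof.
move=> Omy; have p0 := phine0 Omy.
set B := \matrix_(i, j) ((i == j)%:R * eps i * phi (X y) ^+ 2 : R).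
have AB : h y *m B = 1%:M.
  apply/matrixP => a b; rewrite !mxE.
  under eq_bigr do rewrite !mxE.
  rewrite (eq_bigr (fun k => (k == a)%:R * ((a == b)%:R * eps a * eps a * (phi (X y) ^+ 2 / phi (X y) ^+ 2)))); last first.
    move=> k _; have [->|ka] := eqVneq k a; by rewrite /=; ring.
  by rewrite sum_delta divff ?expf_neq0 // mulr1 -mulrA e2 mulr1.
have [uA _] := mulmx1_unit AB.
have -> : hinv h y = B by rewrite /hinv -[RHS](mulKmx uA B) AB mulmx1.
by rewrite mxE.
Qed.

Lemma pd_Dv (F : R -> R) y i d : Dv F (X y) d -> pd (F \o X) i y = alpha i * d.
Proof. by move=> [dF <-]; exact: pd_comp. Qed.

Lemma pd_near_Dv (F : R -> R) (f : 'rV[R]_n -> R) y i d :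
  (\forall z \near y, f z = F (X z)) -> Dv F (X y) d -> pd f i y = alpha i * d.
Proof. by move=> fE [dF <-]; exact: pd_near. Qed.

Lemma pd_h y i j l : Om y ->
  pd (fun z => h z i j) l y =
  alpha l * ((i == j)%:R * eps i * (- 2 * derive1 phi (X y) / phi (X y) ^+ 3)).
Proof.
move=> Omy; have p0 := phine0 Omy; have d := sm0 sphi (OmJ Omy).
have -> : (fun z => h z i j) = (fun s => (i == j)%:R * eps i * (phi s * phi s)^-1) \o X.
  by apply/funext => z; rewrite hE /= expr2.
apply: pd_Dv.
have D := Dv_mul (Dv_cst ((i == j)%:R * eps i) (X y))
   (Dv_inv (f := fun s => phi s * phi s) (mulf_neq0 p0 p0) (Dv_mul (Dv_of d) (Dv_of d))).
apply: Dv_eq D; field; exact: p0.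
Qed.

Lemma dee a b : (a == b)%:R * (eps b * eps a) = (a == b)%:R :> R.
Proof. by have [->|] := eqVneq a b; rewrite ?e2 ?mulr1 ?mul0r. Qed.

Definition gam t := - derive1 phi t / phi t.
Definition dgam t := - (derive1 (derive1 phi) t * phi t - derive1 phi t ^+ 2) / phi t ^+ 2.

Lemma GamE y k i j : Om y -> Gam h k i j y = c k i j * gam (X y).
Proof.
move=> Omy; have p0 := phine0 Omy.
rewrite /Gam.
under eq_bigr do rewrite hinvE // !pd_h //.
set G := (- 2 * derive1 phi (X y) / phi (X y) ^+ 3).
rewrite (eq_bigr (fun l => (k == l)%:R * (eps k * phi (X y) ^+ 2 *
   (alpha i * ((j == l)%:R * eps j * G) + alpha j * ((i == l)%:R * eps i * G)
    - alpha l * ((i == j)%:R * eps i * G))))); last by move=> l _; ring.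
rewrite sum_delta'.
transitivity (gam (X y) * ((j == k)%:R * (eps k * eps j) * alpha i
   + (i == k)%:R * (eps k * eps i) * alpha j - (i == j)%:R * eps i * eps k * alpha k)).
  by rewrite /gam /G; field.
by rewrite !dee /cc; ring.
Qed.

Lemma near_of x (P : 'rV[R]_n -> Prop) : Om x -> (forall z, Om z -> P z) -> \forall z \near x, P z.
Proof. by move=> Omx HP; apply: filterS (nearOm Omx); exact: HP. Qed.

Lemma pdGam x k i j l : Om x ->
  pd (Gam h k i j) l x = alpha l * (c k i j * dgam (X x)).
Proof.
move=> Omx; have p0 := phine0 Omx.
have d0 := sm0 sphi (OmJ Omx); have d1 := sm1 sphi (OmJ Omx).
apply: (@pd_near_Dv (fun s => c k i j * gam s)).
  by apply: near_of => // z Omz; rewrite GamE.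
have D := Dv_mul (Dv_cst (c k i j) (X x))
   (Dv_mul (Dv_mul (Dv_cst (-1) (X x)) (Dv_of d1)) (Dv_inv p0 (Dv_of d0))).
apply: (Dv_ext (f := fun s => c k i j * ((-1 * derive1 phi s) * (phi s)^-1))).
  by move=> s; rewrite /gam; ring.
by apply: Dv_eq D; rewrite /dgam; field.
Qed.

Lemma pdcomp F x i : Om x -> smooth_on J F -> pd (F \o X) i x = alpha i * derive1 F (X x).
Proof. by move=> Omx sF; apply: pd_comp; exact: sm0 sF (OmJ Omx). Qed.

Lemma pdpd F x i j : Om x -> smooth_on J F ->
  pd (pd (F \o X) j) i x = alpha i * (alpha j * derive1 (derive1 F) (X x)).
Proof.
move=> Omx sF; apply: (@pd_near_Dv (fun s => alpha j * derive1 F s)).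
  by apply: near_of => // z Omz; rewrite pdcomp.
have D := Dv_mul (Dv_cst (alpha j) (X x)) (Dv_of (sm1 sF (OmJ Omx))).
by apply: Dv_eq D; ring.
Qed.

Lemma HessE x i j : Om x ->
  Hess h (N \o X) i j x = alpha i * alpha j * derive1 (derive1 N) (X x)
   - gam (X x) * derive1 N (X x) * (2 * alpha i * alpha j - (i == j)%:R * eps i * \sum_k eps k * alpha k ^+ 2).
Proof.
move=> Omx; rewrite /Hess pdpd //.
under eq_bigr do rewrite GamE // pdcomp //.
rewrite -S1 mulr_sumr.
have -> : \sum_k c k i j * gam (X x) * (alpha k * derive1 N (X x)) = \sum_k gam (X x) * derive1 N (X x) * (alpha k * c k i j).
  by apply: eq_bigr => k _; ring.
ring.
Qed.

Lemma S6 i j : \sum_k \sum_l c k k l * c l i j =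
  n%:R * (2 * alpha i * alpha j - (i == j)%:R * eps i * \sum_k eps k * alpha k ^+ 2).
Proof.
rewrite exchange_big /= -S1 mulr_sumr; apply: eq_bigr => l _.
by rewrite -mulr_suml S3 // mulrA.
Qed.

Lemma RicE x i j : Om x ->
  let e0 := \sum_k eps k * alpha k ^+ 2 in
  let g := gam (X x) in let dg := dgam (X x) in
  Ric h i j x = dg * (2 * alpha i * alpha j - (i == j)%:R * eps i * e0)
    - alpha j * dg * (n%:R * alpha i)
    + g ^+ 2 * (n%:R * (2 * alpha i * alpha j - (i == j)%:R * eps i * e0)
        - ((n%:R + 2) * alpha i * alpha j - 2 * (i == j)%:R * eps i * e0)).
Proof.
move=> Omx e0 g dg; rewrite /Ric.
rewrite (eq_bigr (fun k => dg * (alpha k * c k i j) - (alpha j * dg) * c k i k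
   + g ^+ 2 * (\sum_l c k k l * c l i j - \sum_l c k j l * c l i k))); last first.
  move=> k _; rewrite !pdGam //; congr (_ + _); first by rewrite /dg; ring.
  rewrite -sumrB mulr_sumr; apply: eq_bigr => l _; rewrite !GamE //.
  by rewrite /g; ring.
rewrite big_split sumrB /=.
rewrite -[\sum_(k < n) dg * _]mulr_sumr -[\sum_(k < n) (alpha j * dg) * _]mulr_sumr.
rewrite -[\sum_(k < n) g ^+ 2 * _]mulr_sumr.
by rewrite S1 S2 // sumrB S6 S4.
Qed.

Lemma hsum y (F : 'I_n -> 'I_n -> R) : Om y ->
  \sum_i \sum_j hinv h y i j * F i j = phi (X y) ^+ 2 * \sum_i eps i * F i i.
Proof.
move=> Omy; rewrite mulr_sumr; apply: eq_bigr => i _.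
under eq_bigr do rewrite hinvE //.
rewrite (eq_bigr (fun j => (i == j)%:R * (eps i * phi (X y) ^+ 2 * F i j))); last by move=> j _; ring.
by rewrite sum_delta'; ring.
Qed.

Lemma gradnorm2E x : Om x ->
  gradnorm2 h (psi \o X) x = phi (X x) ^+ 2 * (\sum_k eps k * alpha k ^+ 2) * derive1 psi (X x) ^+ 2.
Proof.
move=> Omx; rewrite /gradnorm2.
under eq_bigr do under eq_bigr do rewrite -mulrA.
rewrite hsum // -mulrA [_ * derive1 psi _ ^+ 2]mulr_suml; congr (_ * _); apply: eq_bigr => k _.
by rewrite !pdcomp //; ring.
Qed.

Lemma LapE x : Om x ->
  Lap h (N \o X) x = phi (X x) ^+ 2 * ((\sum_k eps k * alpha k ^+ 2) * derive1 (derive1 N) (X x)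
     - gam (X x) * derive1 N (X x) * (2 - n%:R) * (\sum_k eps k * alpha k ^+ 2)).
Proof.
move=> Omx; rewrite /Lap hsum //; congr (_ * _).
under eq_bigr do rewrite HessE // eqxx.
set e0 := \sum_k eps k * alpha k ^+ 2.
rewrite (eq_bigr (fun k => eps k * alpha k ^+ 2 * (derive1 (derive1 N) (X x) - 2 * gam (X x) * derive1 N (X x))
   + (eps k * eps k) * (gam (X x) * derive1 N (X x) * e0))); last by move=> k _; rewrite -/e0 /=; ring.
rewrite big_split /= -mulr_suml.
under eq_bigr do rewrite e2 mul1r.
rewrite sumr_const card_ord -/e0 -mulr_natl; ring.
Qed.

Lemma gradvE z i : Om z ->
  gradv h (psi \o X) i z = eps i * alpha i * (phi (X z) ^+ 2 * derive1 psi (X z)).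
Proof.
move=> Omz; rewrite /gradv.
under eq_bigr do rewrite hinvE // pdcomp //.
rewrite (eq_bigr (fun j => (i == j)%:R * (eps i * phi (X z) ^+ 2 * (alpha j * derive1 psi (X z))))); last by move=> j _; ring.
by rewrite sum_delta'; ring.
Qed.

Definition W s := phi s * phi s * derive1 psi s * (N s)^-1.
Definition dW t := ((derive1 phi t * phi t + phi t * derive1 phi t) * derive1 psi t
   + phi t * phi t * derive1 (derive1 psi) t) * (N t)^-1
   + phi t * phi t * derive1 psi t * (- derive1 N t / N t ^+ 2).

Lemma VE z i : Om z ->
  gradv h (psi \o X) i z / (N \o X) z = eps i * alpha i * W (X z).
Proof. by move=> Omz; rewrite gradvE // /W /=; ring. Qed.

Lemma pdV x i : Om x ->
  pd (fun y => gradv h (psi \o X) i y / (N \o X) y) i x = alpha i * (eps i * alpha i * dW (X x)).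
Proof.
move=> Omx; have N0 : N (X x) != 0 by apply: lt0r_neq0; exact: Npos.
have Jx := OmJ Omx.
apply: (@pd_near_Dv (fun s => eps i * alpha i * W s)).
  by apply: near_of => // z Omz; rewrite VE.
have D := Dv_mul (Dv_cst (eps i * alpha i) (X x))
   (Dv_mul (Dv_mul (Dv_mul (Dv_of (sm0 sphi Jx)) (Dv_of (sm0 sphi Jx))) (Dv_of (sm1 spsi Jx)))
      (Dv_inv N0 (Dv_of (sm0 sN Jx)))).
by apply: Dv_eq D; rewrite /dW; ring.
Qed.

Lemma divgE x : Om x ->
  divg h (fun i y => gradv h (psi \o X) i y / (N \o X) y) x =
  (\sum_k eps k * alpha k ^+ 2) * dW (X x)
  + n%:R * gam (X x) * W (X x) * (\sum_k eps k * alpha k ^+ 2).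
Proof.
move=> Omx; rewrite /divg big_split /=; congr (_ + _).
  rewrite mulr_suml; apply: eq_bigr => k _; rewrite pdV //; ring.
under eq_bigr do under eq_bigr do rewrite GamE // VE //.
rewrite exchange_big /= mulr_sumr; apply: eq_bigr => k _.
rewrite (eq_bigr (fun i => c i i k * (gam (X x) * eps k * alpha k * W (X x)))); last by move=> i _; ring.
by rewrite -mulr_suml S3 //; ring.
Qed.

Lemma pointwise x e0 : Om x -> (3 <= n)%N -> \sum_k eps k * alpha k ^+ 2 = e0 ->
  let t := X x in
  let p := phi t in let p1 := derive1 phi t in
  let p2 := derive1 (derive1 phi) t in
  let M := N t in let M1 := derive1 N t in
  let M2 := derive1 (derive1 N) t in
  let s1 := derive1 psi t in
  let s2 := derive1 (derive1 psi) t in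
  [/\ (forall i j, N t * Ric h i j x - (Hess h (N \o X) i j x - 2 * (pd (psi \o X) i x * pd (psi \o X) j x) / N t
          + 2 / ((n - 1)%:R * N t) * gradnorm2 h (psi \o X) x * h x i j) =
        p^-1 * ((n - 2)%:R * p2 * M - p * M2 - 2 * p1 * M1 + 2 * p / M * s1 ^+ 2) * (alpha i * alpha j)
        + (p ^+ 2)^-1 * (e0 * (p * p2 * M - (n - 1)%:R * M * p1 ^+ 2 + p * p1 * M1
              - 2 * p ^+ 2 * s1 ^+ 2 / ((n - 1)%:R * M))) * ((i == j)%:R * eps i)),
      Lap h (N \o X) x - Chat2 R n * gradnorm2 h (psi \o X) x / N t =
        (p / M) * (e0 * (p * M * M2 - (n - 2)%:R * p1 * M * M1 - Chat2 R n * p * s1 ^+ 2)) &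
      divg h (fun i y => gradv h (psi \o X) i y / (N \o X) y) x =
        (p / M ^+ 2) * (e0 * (p * M * s2 - (n - 2)%:R * p1 * M * s1 - p * M1 * s1))].
Proof.
move=> Omx n3 sumE t p p1 p2 M M1 M2 s1 s2.
have p0 : p != 0 by exact: phine0.
have M0 : M != 0 by apply: lt0r_neq0; exact: Npos.
have n2E : (n - 2)%:R = n%:R - 2 :> R by rewrite natrB //; apply: leq_trans n3.
have n1E : (n - 1)%:R = n%:R - 1 :> R by rewrite natrB //; apply: leq_trans n3.
have n1 : n%:R - 1 != 0 :> R.
  rewrite -n1E pnatr_eq0 -lt0n subn_gt0; by apply: leq_trans n3.
rewrite n2E n1E; split.
- move=> i j; rewrite RicE // HessE // gradnorm2E // hE !pdcomp // sumE.
  rewrite /gam /dgam -/t -/p -/p1 -/p2 -/M -/M1 -/M2 -/s1.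
  by field; rewrite ?p0 ?M0 ?n1.
- rewrite LapE // gradnorm2E // sumE /Chat2 n2E n1E /gam -/t -/p -/p1 -/p2 -/M -/M1 -/M2 -/s1.
  by field; rewrite ?p0 ?M0 ?n1.
- rewrite divgE // sumE /gam /W /dW -/t -/p -/p1 -/p2 -/M -/M1 -/M2 -/s1 -/s2.
  by field; rewrite ?p0 ?M0.
Qed.

End Main.

Lemma tensor (R : realType) n (eps alpha : 'I_n -> R) (A B : R) :
  (2 <= n)%N -> (forall k, eps k * eps k = 1) -> (exists i, alpha i != 0) ->
  (forall i j, A * (alpha i * alpha j) + B * ((i == j)%:R * eps i) = 0) -> A = 0 /\ B = 0.
Proof.
move=> n2 e2 [i0 a0] H.
have [j ji0] : exists j : 'I_n, j != i0.
  have n0 : (0 < n)%N by apply: leq_trans n2.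
  pose a := Ordinal n0; pose b := Ordinal n2.
  case: (eqVneq i0 a) => [ea|na]; last by exists a; rewrite eq_sym.
  by exists b; rewrite ea.
have Hj := H j j; have H0 := H i0 i0; have Hij := H i0 j.
rewrite eqxx /= mul1r in Hj H0; rewrite eq_sym (negbTE ji0) /= mul0r mulr0 addr0 in Hij.
have ej : eps j != 0 by apply/eqP => E; move: (e2 j); rewrite E mul0r => /eqP; rewrite eq_sym oner_eq0.
have e0 : eps i0 != 0 by apply/eqP => E; move: (e2 i0); rewrite E mul0r => /eqP; rewrite eq_sym oner_eq0.
have [aj|aj] := eqVneq (alpha j) 0.
  move: Hj; rewrite aj mulr0 mulr0 add0r => /eqP; rewrite mulf_eq0 (negbTE ej) orbF => /eqP B0.
  move: H0; rewrite B0 mul0r addr0 => /eqP; rewrite !mulf_eq0 (negbTE a0) !orbF => /eqP //.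
move: Hij => /eqP; rewrite !mulf_eq0 (negbTE a0) (negbTE aj) !orbF => /eqP A0.
move: H0; rewrite A0 mul0r add0r eqxx /= mul1r => /eqP; rewrite mulf_eq0 (negbTE e0) orbF => /eqP //.
Qed.

Unset Implicit Arguments. Set Strict Implicit.

Theorem theorem1p2 (R : realType) (n : nat) (eps alpha : 'I_n -> R) (e0 : R)
  (J : set R) (Om : set 'rV[R]_n) (phi psi N : R -> R) :
  (3 <= n)%N ->
  (forall i, eps i = 1 \/ eps i = -1) ->
  (exists i, alpha i != 0) ->
  \sum_(i < n) eps i * alpha i ^+ 2 = e0 ->
  (e0 = -1 \/ e0 = 0 \/ e0 = 1) ->
  open J -> smooth_on J phi -> smooth_on J psi -> smooth_on J N ->
  open Om -> (forall x, Om x -> J (xi alpha x)) ->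
  (forall x, Om x -> 0 < phi (xi alpha x)) ->
  (forall x, Om x -> 0 < N (xi alpha x)) ->
  electrostatic Om (gbar eps alpha phi) (N \o xi alpha) (psi \o xi alpha) <->
  (forall x, Om x ->
    let t := xi alpha x in
    let p := phi t in let p1 := derive1 phi t in
    let p2 := derive1 (derive1 phi) t in
    let M := N t in let M1 := derive1 N t in
    let M2 := derive1 (derive1 N) t in
    let s1 := derive1 psi t in
    let s2 := derive1 (derive1 psi) t in
    [/\ (n - 2)%:R * p2 * M - p * M2 - 2 * p1 * M1 + 2 * p / M * s1 ^+ 2 = 0,
        e0 * (p * p2 * M - (n - 1)%:R * M * p1 ^+ 2 + p * p1 * M1
              - 2 * p ^+ 2 * s1 ^+ 2 / ((n - 1)%:R * M)) = 0,
        e0 * (p * M * s2 - (n - 2)%:R * p1 * M * s1 - p * M1 * s1) = 0 &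
        e0 * (p * M * M2 - (n - 2)%:R * p1 * M * M1
              - Chat2 R n * p * s1 ^+ 2) = 0]).
Proof.
move=> n3 epsH ex sumE _ oJ sphi spsi sN oOm OmJ phipos Npos.
have e2 : forall k, eps k * eps k = 1.
  by move=> k; case: (epsH k) => ->; rewrite ?mulr1 ?mulrNN ?mulr1.
have n2 : (2 <= n)%N by apply: leq_trans n3.
split.
- move=> H x Omx.
  have p0 : phi (xi alpha x) != 0 by apply: lt0r_neq0; exact: phipos.
  have M0 : N (xi alpha x) != 0 by apply: lt0r_neq0; exact: Npos.
  have [PT PL PD] := pointwise e2 sphi spsi sN oOm OmJ phipos Npos Omx n3 sumE.
  have [_ HL HD HT] := H x Omx.
  set t := xi alpha x in PT PL PD p0 M0 *.
  set p := phi t in PT PL PD p0 *.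
  set M := N t in PT PL PD M0 *.
  set p1 := derive1 phi t in PT PL PD *.
  set p2 := derive1 (derive1 phi) t in PT PL PD *.
  set M1 := derive1 N t in PT PL PD *.
  set M2 := derive1 (derive1 N) t in PT PL PD *.
  set s1 := derive1 psi t in PT PL PD *.
  set s2 := derive1 (derive1 psi) t in PT PL PD *.
  pose A := p^-1 * ((n - 2)%:R * p2 * M - p * M2 - 2 * p1 * M1 + 2 * p / M * s1 ^+ 2).
  pose B := (p ^+ 2)^-1 * (e0 * (p * p2 * M - (n - 1)%:R * M * p1 ^+ 2 + p * p1 * M1
              - 2 * p ^+ 2 * s1 ^+ 2 / ((n - 1)%:R * M))).
  have [A0 B0] : A = 0 /\ B = 0.
    apply: (tensor n2 e2 ex) => i j.
    rewrite /A /B -PT; apply/eqP; rewrite subr_eq0; apply/eqP; exact: HT.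
  have pM : p / M != 0 by rewrite mulf_neq0 ?invr_eq0.
  have pM2 : p / M ^+ 2 != 0 by rewrite mulf_neq0 ?invr_eq0 ?expf_neq0.
  cbv zeta; rewrite -/t -/p -/M -/p1 -/p2 -/M1 -/M2 -/s1 -/s2.
  split.
  - by move/eqP: A0; rewrite /A mulf_eq0 invr_eq0 (negbTE p0) /= => /eqP.
  - by move/eqP: B0; rewrite /B mulf_eq0 invr_eq0 expf_eq0 (negbTE p0) andbF /= => /eqP.
  - by move: HD; rewrite PD => /eqP; rewrite mulf_eq0 (negbTE pM2) /= => /eqP.
  - by move/eqP: HL; rewrite -subr_eq0 PL mulf_eq0 (negbTE pM) /= => /eqP.
- move=> H x Omx.
  have := H x Omx; cbv zeta => -[E1 E2 E3 E4].
  have [PT PL PD] := pointwise e2 sphi spsi sN oOm OmJ phipos Npos Omx n3 sumE.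
  split.
  - exact: Npos.
  - by apply/eqP; rewrite -subr_eq0 PL E4 mulr0.
  - by rewrite PD E3 mulr0.
  - by move=> i j; apply/eqP; rewrite -subr_eq0 PT E1 E2 !mulr0 !mul0r addr0.
Qed.
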